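(* Let $\gamma\in\mathcal{C}$ be a convex curve. Then $$\frac{L_*(\gamma)^2}{4A_U}=A_\gamma-2A_{WC(\gamma)}-A_{CWMS(\gamma)}.$$
   Context: Standing setting. $[a,b]$ is the $2\times2$ determinant with columns $a,b$. The unit ball $U$ of a normed plane is compact convex, origin-symmetric, with nonempty interior, and boundary $u=\partial U$ a union of $2n$ arcs $u_{i+n}=-u_i$, each a smooth strictly convex arc or a segment; $u$ is parameterized as a closed curve $u:[0,2T]\to\mathbb{R}^2$ with $u(t+T)=-u(t)$, smooth with $u'\ne0$ on each interval $[t_i,t_{i+1}]$ between vertices ($[u',u'']\neq 0$ on strictly convex arcs); $A_U=\frac12\int_0^{2T}[u,u']dt$ is the area of $U$. Admissible class $\mathcal{C}$: closed continuous curves $\gamma:[0,2T]\to\mathbb{R}^2$ (extended $2T$-periodically), smooth on each $[t_i,t_{i+1}]$ with $\gamma'(t)=r(t)u'(t)$ for a scalar function $r$. Dual length $L_*(\gamma)=\int_0^{2T} r(t)[u,u'](t)\,dt$; mean width $w_\gamma=L_*(\gamma)/A_U$. $A_\gamma=\frac12\int_0^{2T}[\gamma,\gamma'](t)dt$ (the signed area, equal to the enclosed area for a positively oriented convex curve). $WC(\gamma)(t)=\frac12(\gamma(t)+\gamma(t+T))$, which is $T$-periodic, and $A_{WC(\gamma)}=\frac12\int_0^{T}[WC(\gamma),WC(\gamma)'](t)\,dt$ is its signed area over one period. $CWMS(\gamma)(t)=\frac12(\gamma(t)-\gamma(t+T)-w_\gamma u(t))$ and $A_{CWMS(\gamma)}=\frac12\int_0^{2T}[CWMS(\gamma),CWMS(\gamma)'](t)\,dt$.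 *)

(* Defs.v *)
From Stdlib Require Import Reals.
From Coquelicot Require Import Coquelicot.
Open Scope R_scope.

Definition pt := (R * R)%type.
Definition padd (a b : pt) : pt := (fst a + fst b, snd a + snd b).
Definition pscale (k : R) (a : pt) : pt := (k * fst a, k * snd a).
Definition popp (a : pt) : pt := (- fst a, - snd a).

Definition det (a b : pt) : R := fst a * snd b - snd a * fst b.

Definition dcurve (c : R -> pt) (t : R) : pt :=
  (Derive (fun s => fst (c s)) t, Derive (fun s => snd (c s)) t).

Definition smooth_curve (g : R -> pt) : Prop :=
  forall (k : nat) (x : R),
    ex_derive_n (fun s => fst (g s)) k x /\ ex_derive_n (fun s => snd (g s)) k x.

(* c is smooth on the closed interval [a,b]: it is the restriction of a
   C^infinity curve g; derivatives on [a,b] (incl. one-sided ones at the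
   endpoints) are those of g. *)
Definition smooth_ext_on (a b : R) (c g : R -> pt) : Prop :=
  smooth_curve g /\ forall x, a <= x <= b -> g x = c x.

(* Euclidean topology of the plane (all norms are equivalent) *)
Definition dist2 (p q : pt) : R := (fst p - fst q)^2 + (snd p - snd q)^2.
Definition interior_pt (K : pt -> Prop) (p : pt) : Prop :=
  exists eps, 0 < eps /\ forall q, dist2 p q < eps^2 -> K q.
Definition closed_set (K : pt -> Prop) : Prop :=
  forall p, (forall eps, 0 < eps -> exists q, K q /\ dist2 p q < eps^2) -> K p.
Definition bounded_set (K : pt -> Prop) : Prop :=
  exists M, forall p, K p -> dist2 p (0,0) <= M.
Definition convex_set (K : pt -> Prop) : Prop :=
  forall p q l, K p -> K q -> 0 <= l <= 1 ->
    K (padd (pscale (1 - l) p) (pscale l q)).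
Definition convex_body (K : pt -> Prop) : Prop :=
  convex_set K /\ closed_set K /\ bounded_set K /\ exists p, interior_pt K p.
Definition boundary (K : pt -> Prop) (p : pt) : Prop :=
  K p /\ ~ interior_pt K p.

(* Data: U the unit ball, T > 0 the half period, n >= 1, vertices tv 0 < ... < tv (2n),
   u : R -> pt the boundary parameterization. *)
Record unit_ball_param (U : pt -> Prop) (T : R) (n : nat) (tv : nat -> R)
    (u : R -> pt) : Prop := {
  ub_T : 0 < T;
  ub_n : (1 <= n)%nat;
  ub_body : convex_body U;
  ub_sym : forall p, U p -> U (popp p);
  ub_t0 : tv 0%nat = 0;
  ub_tend : tv (2 * n)%nat = 2 * T;
  ub_tinc : forall i, (i < 2 * n)%nat -> tv i < tv (S i);
  ub_tsym : forall i, (i <= n)%nat -> tv (i + n)%nat = tv i + T;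
  ub_antipodal : forall t, u (t + T) = popp (u t);
  ub_image : forall p, boundary U p <-> exists t, 0 <= t <= 2 * T /\ u t = p;
  ub_simple : forall s t, 0 <= s < 2 * T -> 0 <= t < 2 * T -> u s = u t -> s = t;
  (* positive orientation, so that A_U is the area of U *)
  ub_orient : forall i t, (i < 2 * n)%nat -> tv i < t < tv (S i) ->
      0 < det (u t) (dcurve u t);
  ub_arcs : forall i, (i < 2 * n)%nat -> exists g,
      smooth_ext_on (tv i) (tv (S i)) u g /\
      (forall t, tv i <= t <= tv (S i) -> dcurve g t <> (0, 0)) /\
      ((forall t, tv i <= t <= tv (S i) -> det (dcurve g t) (dcurve (dcurve g) t) <> 0)
       \/ (forall s t, tv i <= s <= tv (S i) -> tv i <= t <= tv (S i) ->
             det (dcurve g s) (dcurve g t) = 0))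
}.

Definition area_U (T : R) (u : R -> pt) : R :=
  / 2 * RInt (fun t => det (u t) (dcurve u t)) 0 (2 * T).

(* admissible class C: gamma closed, continuous, 2T-periodic, smooth on each
   [t_i, t_{i+1}], with gamma' = r u' (checked on the open arcs, where u' is
   the ordinary derivative). *)
Definition admissible (T : R) (n : nat) (tv : nat -> R) (u : R -> pt)
    (gamma : R -> pt) (r : R -> R) : Prop :=
  (forall t, gamma (t + 2 * T) = gamma t) /\
  (forall t, continuous (fun s => fst (gamma s)) t /\
             continuous (fun s => snd (gamma s)) t) /\
  (forall i, (i < 2 * n)%nat -> exists g, smooth_ext_on (tv i) (tv (S i)) gamma g) /\
  (forall i t, (i < 2 * n)%nat -> tv i < t < tv (S i) ->
     dcurve gamma t = pscale (r t) (dcurve u t)).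

Definition convex_curve (T : R) (gamma : R -> pt) : Prop :=
  exists K, convex_body K /\
    forall p, boundary K p <-> exists t, 0 <= t <= 2 * T /\ gamma t = p.

Definition dual_length (T : R) (u : R -> pt) (r : R -> R) : R :=
  RInt (fun t => r t * det (u t) (dcurve u t)) 0 (2 * T).

Definition mean_width (T : R) (u : R -> pt) (r : R -> R) : R :=
  dual_length T u r / area_U T u.

Definition area_curve (T : R) (gamma : R -> pt) : R :=
  / 2 * RInt (fun t => det (gamma t) (dcurve gamma t)) 0 (2 * T).

Definition WC (T : R) (gamma : R -> pt) (t : R) : pt :=
  pscale (/ 2) (padd (gamma t) (gamma (t + T))).

Definition area_WC (T : R) (gamma : R -> pt) : R :=
  / 2 * RInt (fun t => det (WC T gamma t) (dcurve (WC T gamma) t)) 0 T.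

Definition CWMS (T : R) (u : R -> pt) (r : R -> R) (gamma : R -> pt) (t : R) : pt :=
  pscale (/ 2) (padd (padd (gamma t) (popp (gamma (t + T))))
                     (popp (pscale (mean_width T u r) (u t)))).

Definition area_CWMS (T : R) (u : R -> pt) (r : R -> R) (gamma : R -> pt) : R :=
  / 2 * RInt (fun t => det (CWMS T u r gamma t) (dcurve (CWMS T u r gamma) t)) 0 (2 * T).

(* Main.v *)
Require Import Defs.
From Stdlib Require Import Reals Lra Lia.
From Coquelicot Require Import Coquelicot.
Open Scope R_scope.

Lemma Dfun (f f' : R -> R) : (forall x, is_derive f x (f' x)) ->
  forall x, Derive (fun y => f y) x = f' x.
Proof. intros H x. apply is_derive_unique. apply H. Qed.

Lemma Exf (f f' : R -> R) : (forall x, is_derive f x (f' x)) -> forall x, ex_derive f x.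
Proof. intros H x. exists (f' x). apply H. Qed.

Lemma Derive_shift (f : R -> R) x T : Derive (fun s => f (s + T)) x = Derive f (x + T).
Proof.
  unfold Derive. f_equal. apply Lim_ext. intro h.
  replace (x + T + h) with (x + h + T) by ring. reflexivity.
Qed.

Lemma dcurve_shift (c : R -> pt) x T : dcurve (fun s => c (s + T)) x = dcurve c (x + T).
Proof.
  unfold dcurve.
  exact (f_equal2 pair (Derive_shift (fun y => fst (c y)) x T)
                       (Derive_shift (fun y => snd (c y)) x T)).
Qed.

Lemma dcurve_anti (c : R -> pt) T : (forall s, c (s + T) = popp (c s)) ->
  forall t, dcurve c (t + T) = popp (dcurve c t).
Proof.
  intros H t. rewrite <- dcurve_shift. unfold dcurve, popp. simpl.
  rewrite (Derive_ext (fun s => fst (c (s + T))) (fun s => - fst (c s)))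
    by (intro s; rewrite H; reflexivity).
  rewrite (Derive_ext (fun s => snd (c (s + T))) (fun s => - snd (c s)))
    by (intro s; rewrite H; reflexivity).
  rewrite !Derive_opp. reflexivity.
Qed.

Lemma Dloc (f g : R -> R) g' x : locally x (fun s => f s = g s) -> is_derive g x g' ->
  Derive f x = g'.
Proof.
  intros L D. apply is_derive_unique. apply is_derive_ext_loc with g; auto.
  apply filter_imp with (2 := L). intros s e. auto.
Qed.

Lemma loc_int (P : R -> Prop) a b t : a < t < b -> (forall s, a <= s <= b -> P s) ->
  locally t P.
Proof.
  intros [h1 h2] H. apply locally_interval with (a := Finite a) (b := Finite b); simpl; auto.
  intros y e1 e2. apply H; lra.
Qed.

Lemma PW_ex (f : R -> R) (tv : nat -> R) k :
  (forall i, (i < k)%nat -> ex_RInt f (tv i) (tv (S i))) -> ex_RInt f (tv 0%nat) (tv k).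
Proof.
  induction k; intro H. apply ex_RInt_point.
  apply ex_RInt_Chasles with (tv k). apply IHk; intros; apply H; lia. apply H; lia.
Qed.

Lemma PW_is (f : R -> R) (tv : nat -> R) (H : R -> R) k :
  (forall i, (i < k)%nat -> is_RInt f (tv i) (tv (S i)) (H (tv (S i)) - H (tv i))) ->
  is_RInt f (tv 0%nat) (tv k) (H (tv k) - H (tv 0%nat)).
Proof.
  induction k; intro Hy.
  replace (H (tv 0%nat) - H (tv 0%nat)) with 0 by ring.
  exact (is_RInt_point f (tv 0%nat)).
  replace (H (tv (S k)) - H (tv 0%nat)) with
    ((H (tv k) - H (tv 0%nat)) + (H (tv (S k)) - H (tv k))) by ring.
  exact (is_RInt_Chasles f _ _ _ _ _ (IHk (fun i h => Hy i ltac:(lia))) (Hy k ltac:(lia))).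
Qed.

Lemma arc_ex (f g : R -> R) a b : a < b -> (forall t, a < t < b -> f t = g t) ->
  (forall t, ex_derive g t) -> ex_RInt f a b.
Proof.
  intros ab E D. apply (ex_RInt_ext g).
  intros x. rewrite Rmin_left, Rmax_right by lra. intro h; symmetry; apply E; auto.
  apply (ex_RInt_continuous (V:=R_CompleteNormedModule)). intros z _. exact (ex_derive_continuous (K:=R_AbsRing) (V:=R_NormedModule) g z (D z)).
Qed.

Lemma scal1 (G : R -> R) (x T : R) : scal 1 (G (1 * x + - T)) = G (x - T).
Proof. change (1 * G (1 * x + - T) = G (x - T)). rewrite Rmult_1_l. f_equal. ring. Qed.
Lemma t1 (G : R -> R) T : ex_RInt G (1 * T + - T) (1 * (2 * T) + - T) -> ex_RInt (fun y => scal 1 (G (1 * y + - T))) T (2*T).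
Proof. intro. apply (ex_RInt_comp_lin G). auto. Qed.
Lemma t2 (F G : R -> R) T : (forall t, G t = F (t + T)) -> forall x, scal 1 (G (1 * x + - T)) = F x.
Proof. intros HG x. rewrite scal1, HG. f_equal. ring. Qed.
Lemma t3 (F G : R -> R) T : (forall x, scal 1 (G (1 * x + - T)) = F x) ->
 ex_RInt (fun y => scal 1 (G (1 * y + - T))) T (2*T) -> ex_RInt F T (2*T).
Proof. intros EF H. apply (ex_RInt_ext (fun y => scal 1 (G (1 * y + - T)))). intros x _. apply EF. exact H. Qed.
Lemma t4 (F G : R -> R) T : (forall x, scal 1 (G (1 * x + - T)) = F x) ->
 ex_RInt G 0 T -> RInt F T (2*T) = RInt G 0 T.
Proof. intros EF H.
  assert (H' : ex_RInt G (1 * T + - T) (1 * (2 * T) + - T)).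
  { replace (1 * T + - T) with 0 by ring. replace (1 * (2 * T) + - T) with T by ring. auto. }
  pose proof (RInt_comp_lin G 1 (-T) T (2*T) H') as E1.
  replace (1 * T + - T) with 0 in E1 by ring. replace (1 * (2 * T) + - T) with T in E1 by ring.
  rewrite <- E1. apply RInt_ext. intros x _. symmetry. apply EF.
Qed.
Lemma Lshift (F G : R -> R) T : (forall t, G t = F (t + T)) ->
  ex_RInt F 0 T -> ex_RInt G 0 T ->
  ex_RInt F 0 (2 * T) /\ RInt F 0 (2 * T) = RInt F 0 T + RInt G 0 T.
Proof.
  intros HG HF HGi.
  pose proof (t2 F G T HG) as EF.
  assert (E : ex_RInt G (1 * T + - T) (1 * (2 * T) + - T)).
  { replace (1 * T + - T) with 0 by ring. replace (1 * (2 * T) + - T) with T by ring. auto. }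
  pose proof (t3 F G T EF (t1 G T E)) as HF2.
  split. apply ex_RInt_Chasles with T; auto.
  rewrite <- (t4 F G T EF HGi).
  symmetry. exact (RInt_Chasles F 0 T (2 * T) HF HF2).
Qed.

Lemma smooth_facts (g : R -> pt) : smooth_curve g ->
  (forall x, is_derive (fun s => fst (g s)) x (Derive (fun s => fst (g s)) x)) /\
  (forall x, ex_derive (Derive (fun s => fst (g s))) x) /\
  (forall x, is_derive (fun s => snd (g s)) x (Derive (fun s => snd (g s)) x)) /\
  (forall x, ex_derive (Derive (fun s => snd (g s))) x).
Proof.
  intro H. split; [|split; [|split]]; intro y.
  - apply Derive_correct. destruct (H 1%nat y) as [A _]. exact A.
  - destruct (H 2%nat y) as [A _]. exact A.
  - apply Derive_correct. destruct (H 1%nat y) as [_ A]. exact A.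
  - destruct (H 2%nat y) as [_ A]. exact A.
Qed.

Lemma shift_facts (f : R -> R) T :
  (forall x, is_derive f x (Derive f x)) -> (forall x, ex_derive (Derive f) x) ->
  (forall x, is_derive (fun s => f (s + T)) x (Derive f (x + T))) /\
  (forall x, ex_derive (fun s => Derive f (s + T)) x).
Proof.
  intros D E. split; intro x.
  - auto_derive. exists (Derive f (x+T)); auto. rewrite Rmult_1_l; reflexivity.
  - auto_derive. auto.
Qed.

Lemma arc_data U T n tv u gamma r i :
  unit_ball_param U T n tv u -> admissible T n tv u gamma r -> (i < n)%nat ->
  exists p1 p2 q1 q2 v1 v2 p1' p2' q1' q2' v1' v2' : R -> R,
  ((forall x, is_derive p1 x (p1' x)) /\ (forall x, ex_derive p1' x)) /\
  ((forall x, is_derive p2 x (p2' x)) /\ (forall x, ex_derive p2' x)) /\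
  ((forall x, is_derive q1 x (q1' x)) /\ (forall x, ex_derive q1' x)) /\
  ((forall x, is_derive q2 x (q2' x)) /\ (forall x, ex_derive q2' x)) /\
  ((forall x, is_derive v1 x (v1' x)) /\ (forall x, ex_derive v1' x)) /\
  ((forall x, is_derive v2 x (v2' x)) /\ (forall x, ex_derive v2' x)) /\
  (forall s, tv i <= s <= tv (S i) ->
     gamma s = (p1 s, p2 s) /\ gamma (s + T) = (q1 s, q2 s) /\ u s = (v1 s, v2 s)).
Proof.
  intros HU HA Hi.
  destruct (ub_arcs _ _ _ _ _ HU i ltac:(lia)) as [gu [[Sgu Egu] _]].
  destruct HA as [_ [_ [Harc _]]].
  destruct (Harc i ltac:(lia)) as [gg [Sgg Egg]].
  destruct (Harc (i + n)%nat ltac:(lia)) as [GG [SGG EGG]].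
  assert (T1 : tv (i + n)%nat = tv i + T) by (apply (ub_tsym _ _ _ _ _ HU); lia).
  assert (T2 : tv (S (i + n)) = tv (S i) + T).
  { replace (S (i + n)) with (S i + n)%nat by lia. apply (ub_tsym _ _ _ _ _ HU); lia. }
  rewrite T1, T2 in EGG.
  destruct (smooth_facts _ Sgu) as [Du1 [Eu1 [Du2 Eu2]]].
  destruct (smooth_facts _ Sgg) as [Dg1 [Eg1 [Dg2 Eg2]]].
  destruct (smooth_facts _ SGG) as [DG1 [EG1 [DG2 EG2]]].
  destruct (shift_facts _ T DG1 EG1) as [DQ1 EQ1].
  destruct (shift_facts _ T DG2 EG2) as [DQ2 EQ2].
  exists (fun s => fst (gg s)), (fun s => snd (gg s)),
    (fun s => fst (GG (s + T))), (fun s => snd (GG (s + T))),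
    (fun s => fst (gu s)), (fun s => snd (gu s)),
    (Derive (fun s => fst (gg s))), (Derive (fun s => snd (gg s))),
    (fun s => Derive (fun y => fst (GG y)) (s + T)),
    (fun s => Derive (fun y => snd (GG y)) (s + T)),
    (Derive (fun s => fst (gu s))), (Derive (fun s => snd (gu s))).
  split; [split; auto|]. split; [split; auto|]. split; [split; auto|].
  split; [split; auto|]. split; [split; auto|]. split; [split; auto|].
  intros s Hs. split; [|split].
  - rewrite <- Egg by auto. destruct (gg s); reflexivity.
  - rewrite <- EGG by lra. destruct (GG (s + T)); reflexivity.
  - rewrite <- Egu by auto. destruct (gu s); reflexivity.
Qed.

Lemma Dloc2 (c : R -> pt) (g1 g2 : R -> R) g1' g2' t :
  locally t (fun s => c s = (g1 s, g2 s)) -> is_derive g1 t g1' -> is_derive g2 t g2' ->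
  dcurve c t = (g1', g2').
Proof.
  intros L D1 D2. unfold dcurve.
  assert (E1 : Derive (fun s => fst (c s)) t = g1').
  { apply Dloc with g1; auto. apply filter_imp with (2 := L). intros s e; rewrite e; reflexivity. }
  assert (E2 : Derive (fun s => snd (c s)) t = g2').
  { apply Dloc with g2; auto. apply filter_imp with (2 := L). intros s e; rewrite e; reflexivity. }
  rewrite E1, E2; reflexivity.
Qed.

Ltac exd := repeat match goal with
  | |- _ /\ _ => split
  | |- True => exact I
  | |- ex_derive _ _ => eexists; solve [eauto]
  end.

Lemma good_point T (u gamma : R -> pt) (r : R -> R)
  (p1 p2 q1 q2 v1 v2 p1' p2' q1' q2' v1' v2' : R -> R) a b t :
  (forall x, is_derive p1 x (p1' x)) -> (forall x, is_derive p2 x (p2' x)) ->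
  (forall x, is_derive q1 x (q1' x)) -> (forall x, is_derive q2 x (q2' x)) ->
  (forall x, is_derive v1 x (v1' x)) -> (forall x, is_derive v2 x (v2' x)) ->
  (forall s, a <= s <= b ->
     gamma s = (p1 s, p2 s) /\ gamma (s + T) = (q1 s, q2 s) /\ u s = (v1 s, v2 s)) ->
  (forall s, u (s + T) = popp (u s)) ->
  dcurve gamma t = pscale (r t) (dcurve u t) ->
  dcurve gamma (t + T) = pscale (r (t + T)) (dcurve u (t + T)) ->
  a < t < b ->
  let w := mean_width T u r in
  gamma t = (p1 t, p2 t) /\ gamma (t + T) = (q1 t, q2 t) /\ u t = (v1 t, v2 t) /\
  u (t + T) = (- v1 t, - v2 t) /\
  dcurve gamma t = (p1' t, p2' t) /\ dcurve gamma (t + T) = (q1' t, q2' t) /\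
  dcurve u t = (v1' t, v2' t) /\ dcurve u (t + T) = (- v1' t, - v2' t) /\
  WC T gamma t = (/ 2 * (p1 t + q1 t), / 2 * (p2 t + q2 t)) /\
  dcurve (WC T gamma) t = (/ 2 * (p1' t + q1' t), / 2 * (p2' t + q2' t)) /\
  CWMS T u r gamma t = (/ 2 * (p1 t + - q1 t + - (w * v1 t)), / 2 * (p2 t + - q2 t + - (w * v2 t))) /\
  dcurve (CWMS T u r gamma) t =
    (/ 2 * (p1' t + - q1' t + - (w * v1' t)), / 2 * (p2' t + - q2' t + - (w * v2' t))) /\
  p1' t = r t * v1' t /\ p2' t = r t * v2' t /\
  q1' t = r (t + T) * - v1' t /\ q2' t = r (t + T) * - v2' t.
Proof.
  intros Dp1 Dp2 Dq1 Dq2 Dv1 Dv2 Hcl Hanti Ha1 Ha2 Ht w.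
  pose proof (loc_int _ a b t Ht Hcl) as L.
  assert (Hc : a <= t <= b) by lra.
  destruct (Hcl t Hc) as [G1 [G2 G3]].
  assert (G4 : u (t + T) = (- v1 t, - v2 t)) by (rewrite Hanti, G3; reflexivity).
  assert (D1 : dcurve gamma t = (p1' t, p2' t)).
  { apply Dloc2 with p1 p2; auto. apply filter_imp with (2 := L). intros s [e _]; exact e. }
  assert (D2 : dcurve gamma (t + T) = (q1' t, q2' t)).
  { rewrite <- dcurve_shift. apply Dloc2 with q1 q2; auto. apply filter_imp with (2 := L). intros s [_ [e _]]; exact e. }
  assert (D3 : dcurve u t = (v1' t, v2' t)).
  { apply Dloc2 with v1 v2; auto. apply filter_imp with (2 := L). intros s [_ [_ e]]; exact e. }
  assert (D4 : dcurve u (t + T) = (- v1' t, - v2' t)).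
  { rewrite (dcurve_anti u T Hanti t), D3. reflexivity. }
  rewrite D1, D3 in Ha1. rewrite D2, D4 in Ha2.
  unfold pscale in Ha1, Ha2; simpl in Ha1, Ha2.
  injection Ha1 as R1 R2. injection Ha2 as R3 R4.
  repeat split; auto.
  - unfold WC, pscale, padd. rewrite G1, G2. reflexivity.
  - apply Dloc2 with (fun s => / 2 * (p1 s + q1 s)) (fun s => / 2 * (p2 s + q2 s)).
    + apply filter_imp with (2 := L). intros s [e1 [e2 _]].
      unfold WC, pscale, padd. rewrite e1, e2. reflexivity.
    + auto_derive; exd. rewrite (Dfun _ _ Dp1), (Dfun _ _ Dq1). ring.
    + auto_derive; exd. rewrite (Dfun _ _ Dp2), (Dfun _ _ Dq2). ring.
  - unfold CWMS, pscale, padd, popp. fold w. rewrite G1, G2, G3. reflexivity.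
  - apply Dloc2 with (fun s => / 2 * (p1 s + - q1 s + - (w * v1 s)))
                     (fun s => / 2 * (p2 s + - q2 s + - (w * v2 s))).
    + apply filter_imp with (2 := L). intros s [e1 [e2 e3]].
      unfold CWMS, pscale, padd, popp. fold w. rewrite e1, e2, e3. reflexivity.
    + auto_derive; exd. rewrite (Dfun _ _ Dp1), (Dfun _ _ Dq1), (Dfun _ _ Dv1). ring.
    + auto_derive; exd. rewrite (Dfun _ _ Dp2), (Dfun _ _ Dq2), (Dfun _ _ Dv2). ring.
Qed.

Definition f1 (gamma : R -> pt) t := det (gamma t) (dcurve gamma t).
Definition f2 T (gamma : R -> pt) t := det (gamma (t + T)) (dcurve gamma (t + T)).
Definition f3 T gamma t := det (WC T gamma t) (dcurve (WC T gamma) t).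
Definition f4 T u r gamma t := det (CWMS T u r gamma t) (dcurve (CWMS T u r gamma) t).
Definition f6 (u : R -> pt) (r : R -> R) t := r t * det (u t) (dcurve u t).
Definition f7 T (u : R -> pt) (r : R -> R) t := r (t + T) * det (u (t + T)) (dcurve u (t + T)).
Definition f8 (u : R -> pt) t := det (u t) (dcurve u t).
Definition Phi T u r gamma t :=
  f1 gamma t + f2 T gamma t - 2 * f3 T gamma t - 2 * f4 T u r gamma t
  - mean_width T u r * (f6 u r t + f7 T u r t) + / 2 * mean_width T u r ^ 2 * f8 u t.
Definition Hf T u r (gamma : R -> pt) s :=
  / 2 * mean_width T u r * det (padd (gamma s) (popp (gamma (s + T)))) (u s).

Ltac exd2 := repeat match goal with
  | |- _ /\ _ => split
  | |- True => exact I
  | |- ex_derive _ _ => solve [eauto] || (eexists; solve [eauto])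
  end.

Lemma arc_main U T n tv u gamma r i :
  unit_ball_param U T n tv u -> admissible T n tv u gamma r -> (i < n)%nat ->
  ex_RInt (f1 gamma) (tv i) (tv (S i)) /\ ex_RInt (f2 T gamma) (tv i) (tv (S i)) /\
  ex_RInt (f3 T gamma) (tv i) (tv (S i)) /\ ex_RInt (f4 T u r gamma) (tv i) (tv (S i)) /\
  ex_RInt (f6 u r) (tv i) (tv (S i)) /\ ex_RInt (f7 T u r) (tv i) (tv (S i)) /\
  ex_RInt (f8 u) (tv i) (tv (S i)) /\
  is_RInt (Phi T u r gamma) (tv i) (tv (S i))
     (Hf T u r gamma (tv (S i)) - Hf T u r gamma (tv i)).
Proof.
  intros HU HA Hi.
  destruct (arc_data U T n tv u gamma r i HU HA Hi) as
    [p1 [p2 [q1 [q2 [v1 [v2 [p1' [p2' [q1' [q2' [v1' [v2'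
     [[Dp1 Ep1] [[Dp2 Ep2] [[Dq1 Eq1] [[Dq2 Eq2] [[Dv1 Ev1] [[Dv2 Ev2] Hcl]]]]]]]]]]]]]]]]]].
  assert (ab : tv i < tv (S i)) by (apply (ub_tinc _ _ _ _ _ HU); lia).
  assert (T1 : tv (i + n)%nat = tv i + T) by (apply (ub_tsym _ _ _ _ _ HU); lia).
  assert (T2 : tv (S (i + n)) = tv (S i) + T).
  { replace (S (i + n)) with (S i + n)%nat by lia. apply (ub_tsym _ _ _ _ _ HU); lia. }
  pose proof (ub_antipodal _ _ _ _ _ HU) as Hanti.
  destruct HA as [Hper [_ [_ Hadm]]].
  set (w := mean_width T u r).
  assert (GP : forall t, tv i < t < tv (S i) -> _) by
    (intros t Ht; exact (good_point T u gamma r p1 p2 q1 q2 v1 v2 p1' p2' q1' q2' v1' v2'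
        (tv i) (tv (S i)) t Dp1 Dp2 Dq1 Dq2 Dv1 Dv2 Hcl Hanti
        (Hadm i t ltac:(lia) Ht)
        (Hadm (i + n)%nat (t + T) ltac:(lia) ltac:(rewrite T1, T2; lra)) Ht)).
  assert (Ex : forall x, ex_derive p1 x /\ ex_derive p2 x /\ ex_derive q1 x /\ ex_derive q2 x
                 /\ ex_derive v1 x /\ ex_derive v2 x).
  { intro x; repeat split; eexists; eauto. }
  split; [|split; [|split; [|split; [|split; [|split; [|split]]]]]].
  - apply arc_ex with (fun t => p1 t * p2' t - p2 t * p1' t); auto.
    + intros t Ht. destruct (GP t Ht) as [G1 [G2 [G3 [G4 [D1 [D2 [D3 [D4 [W1 [W2 [C1 [C2 [R1 [R2 [R3 R4]]]]]]]]]]]]]]].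
      unfold f1. rewrite D1, G1. unfold det; simpl. ring.
    + intro t; auto_derive; exd2.
  - apply arc_ex with (fun t => q1 t * q2' t - q2 t * q1' t); auto.
    + intros t Ht. destruct (GP t Ht) as [G1 [G2 [G3 [G4 [D1 [D2 [D3 [D4 [W1 [W2 [C1 [C2 [R1 [R2 [R3 R4]]]]]]]]]]]]]]].
      unfold f2. rewrite D2, G2. unfold det; simpl. ring.
    + intro t; auto_derive; exd2.
  - apply arc_ex with (fun t => / 2 * (p1 t + q1 t) * (/ 2 * (p2' t + q2' t)) - / 2 * (p2 t + q2 t) * (/ 2 * (p1' t + q1' t))); auto.
    + intros t Ht. destruct (GP t Ht) as [G1 [G2 [G3 [G4 [D1 [D2 [D3 [D4 [W1 [W2 [C1 [C2 [R1 [R2 [R3 R4]]]]]]]]]]]]]]].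
      unfold f3. rewrite W2, W1. unfold det; simpl. ring.
    + intro t; auto_derive; exd2.
  - apply arc_ex with (fun t => / 2 * (p1 t + - q1 t + - (w * v1 t)) * (/ 2 * (p2' t + - q2' t + - (w * v2' t)))
        - / 2 * (p2 t + - q2 t + - (w * v2 t)) * (/ 2 * (p1' t + - q1' t + - (w * v1' t)))); auto.
    + intros t Ht. destruct (GP t Ht) as [G1 [G2 [G3 [G4 [D1 [D2 [D3 [D4 [W1 [W2 [C1 [C2 [R1 [R2 [R3 R4]]]]]]]]]]]]]]].
      unfold f4. rewrite C2, C1. unfold det; simpl. unfold w. ring.
    + intro t; auto_derive; exd2.
  - apply arc_ex with (fun t => v1 t * p2' t - v2 t * p1' t); auto.
    + intros t Ht. destruct (GP t Ht) as [G1 [G2 [G3 [G4 [D1 [D2 [D3 [D4 [W1 [W2 [C1 [C2 [R1 [R2 [R3 R4]]]]]]]]]]]]]]].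
      unfold f6. rewrite D3, G3. unfold det; simpl. rewrite R1, R2. ring.
    + intro t; auto_derive; exd2.
  - apply arc_ex with (fun t => - v1 t * q2' t - - v2 t * q1' t); auto.
    + intros t Ht. destruct (GP t Ht) as [G1 [G2 [G3 [G4 [D1 [D2 [D3 [D4 [W1 [W2 [C1 [C2 [R1 [R2 [R3 R4]]]]]]]]]]]]]]].
      unfold f7. rewrite D4, G4. unfold det; simpl. rewrite R3, R4. ring.
    + intro t; auto_derive; exd2.
  - apply arc_ex with (fun t => v1 t * v2' t - v2 t * v1' t); auto.
    + intros t Ht. destruct (GP t Ht) as [G1 [G2 [G3 [G4 [D1 [D2 [D3 [D4 [W1 [W2 [C1 [C2 [R1 [R2 [R3 R4]]]]]]]]]]]]]]].
      unfold f8. rewrite D3, G3. unfold det; simpl. ring.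
    + intro t; auto_derive; exd2.
  - set (hs := fun s => / 2 * w * ((p1 s + - q1 s) * v2 s - (p2 s + - q2 s) * v1 s)).
    set (hs' := fun s => / 2 * w * ((p1' s + - q1' s) * v2 s + (p1 s + - q1 s) * v2' s
                 - ((p2' s + - q2' s) * v1 s + (p2 s + - q2 s) * v1' s))).
    assert (I : is_RInt hs' (tv i) (tv (S i)) (hs (tv (S i)) - hs (tv i))).
    { apply (is_RInt_derive hs hs').
      - intros x _. unfold hs, hs'. auto_derive; exd2.
        rewrite (Dfun _ _ Dp1), (Dfun _ _ Dp2), (Dfun _ _ Dq1), (Dfun _ _ Dq2),
          (Dfun _ _ Dv1), (Dfun _ _ Dv2). ring.
      - intros x _. apply (ex_derive_continuous (K:=R_AbsRing) (V:=R_NormedModule)).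
        unfold hs'. auto_derive; exd2. }
    assert (Eb : Hf T u r gamma (tv (S i)) = hs (tv (S i))).
    { destruct (Hcl (tv (S i)) ltac:(lra)) as [e1 [e2 e3]].
      unfold Hf, hs. rewrite e1, e2, e3. unfold det, padd, popp; simpl. unfold w. ring. }
    assert (Ea : Hf T u r gamma (tv i) = hs (tv i)).
    { destruct (Hcl (tv i) ltac:(lra)) as [e1 [e2 e3]].
      unfold Hf, hs. rewrite e1, e2, e3. unfold det, padd, popp; simpl. unfold w. ring. }
    rewrite Eb, Ea. apply is_RInt_ext with hs'; auto.
    intros t Ht. rewrite Rmin_left, Rmax_right in Ht by lra.
    destruct (GP t Ht) as [G1 [G2 [G3 [G4 [D1 [D2 [D3 [D4 [W1 [W2 [C1 [C2 [R1 [R2 [R3 R4]]]]]]]]]]]]]]].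
    unfold Phi, f1, f2, f3, f4, f6, f7, f8.
    rewrite D1, D2, D3, D4, W2, W1, C2, C1, G1, G2, G3, G4.
    unfold hs', det; simpl. rewrite R1, R2, R3, R4. unfold w. match goal with |- ?a = ?b => change (@eq R a b) end. field.
Qed.

Lemma det_opp a b : det (popp a) (popp b) = det a b.
Proof. unfold det, popp; simpl; ring. Qed.

Lemma f4_per T u r gamma : (forall t, gamma (t + 2 * T) = gamma t) ->
  (forall s, u (s + T) = popp (u s)) -> forall t, f4 T u r gamma (t + T) = f4 T u r gamma t.
Proof.
  intros Hp Ha.
  assert (A : forall s, CWMS T u r gamma (s + T) = popp (CWMS T u r gamma s)).
  { intro s. unfold CWMS. replace (s + T + T) with (s + 2 * T) by ring. rewrite Hp, Ha.
    unfold pscale, padd, popp; simpl. f_equal; ring. }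
  intro t. unfold f4. rewrite A, (dcurve_anti _ T A t). apply det_opp.
Qed.

Lemma f8_per T (u : R -> pt) : (forall s, u (s + T) = popp (u s)) ->
  forall t, f8 u (t + T) = f8 u t.
Proof.
  intros Ha t. unfold f8. rewrite Ha, (dcurve_anti _ T Ha t). apply det_opp.
Qed.

Lemma isR_plus (f g : R -> R) a b If Ig : is_RInt f a b If -> is_RInt g a b Ig ->
  is_RInt (fun t => f t + g t) a b (If + Ig).
Proof. intros H1 H2. exact (is_RInt_plus f g a b If Ig H1 H2). Qed.
Lemma isR_minus (f g : R -> R) a b If Ig : is_RInt f a b If -> is_RInt g a b Ig ->
  is_RInt (fun t => f t - g t) a b (If - Ig).
Proof. intros H1 H2. exact (is_RInt_minus f g a b If Ig H1 H2). Qed.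
Lemma isR_scal (f : R -> R) a b k If : is_RInt f a b If ->
  is_RInt (fun t => k * f t) a b (k * If).
Proof. intros H1. exact (is_RInt_scal f a b k If H1). Qed.

Lemma final_alg (I1 I2 I3 I4 I6 I7 I8 w : R) :
  I1 + I2 - 2 * I3 - 2 * I4 - w * (I6 + I7) + / 2 * w ^ 2 * I8 = 0 ->
  w = (I6 + I7) / (/ 2 * (I8 + I8)) ->
  (I6 + I7) ^ 2 / (4 * (/ 2 * (I8 + I8))) = / 2 * (I1 + I2) - 2 * (/ 2 * I3) - / 2 * (I4 + I4).
Proof.
  intros E Hw.
  replace (/ 2 * (I8 + I8)) with I8 in * by field.
  replace (/ 2 * (I1 + I2) - 2 * (/ 2 * I3) - / 2 * (I4 + I4))
    with (/ 2 * (I1 + I2 - 2 * I3 - 2 * I4)) by field.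
  assert (S : I1 + I2 - 2 * I3 - 2 * I4 = w * (I6 + I7) - / 2 * w ^ 2 * I8) by lra.
  rewrite S. clear E S.
  destruct (Req_dec I8 0) as [Z | NZ].
  - subst I8. unfold Rdiv in *. rewrite Rmult_0_r, Rinv_0 in *.
    rewrite Rmult_0_r in Hw. rewrite Rmult_0_r. subst w. ring.
  - subst w. field. auto.
Qed.

Theorem mainTheorem10 (U : pt -> Prop) (T : R) (n : nat) (tv : nat -> R)
    (u : R -> pt) (gamma : R -> pt) (r : R -> R) :
  unit_ball_param U T n tv u ->
  admissible T n tv u gamma r ->
  convex_curve T gamma ->
  (dual_length T u r) ^ 2 / (4 * area_U T u)
    = area_curve T gamma - 2 * area_WC T gamma - area_CWMS T u r gamma.
Proof.
  intros HU HA _.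
  pose proof (ub_antipodal _ _ _ _ _ HU) as Hanti.
  assert (Hper : forall t, gamma (t + 2 * T) = gamma t) by apply HA.
  assert (T0 : tv 0%nat = 0) by apply (ub_t0 _ _ _ _ _ HU).
  assert (Tn : tv n = T).
  { pose proof (ub_tsym _ _ _ _ _ HU 0%nat ltac:(lia)) as E. simpl in E. rewrite E, T0. ring. }
  pose proof (fun i Hi => arc_main U T n tv u gamma r i HU HA Hi) as AM.
  assert (PWx : forall f : R -> R, (forall i, (i < n)%nat -> ex_RInt f (tv i) (tv (S i))) ->
     ex_RInt f 0 T) by (intros f H; rewrite <- T0, <- Tn; apply PW_ex; auto).
  assert (PWi : forall (f H : R -> R), (forall i, (i < n)%nat ->
     is_RInt f (tv i) (tv (S i)) (H (tv (S i)) - H (tv i))) -> is_RInt f 0 T (H T - H 0))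
    by (intros f H Hy; rewrite <- T0, <- Tn; apply PW_is; auto).
  assert (X1 : ex_RInt (f1 gamma) 0 T) by (apply PWx; intros i Hi; destruct (AM i Hi) as [? [? [? [? [? [? [? ?]]]]]]]; assumption).
  assert (X2 : ex_RInt (f2 T gamma) 0 T) by (apply PWx; intros i Hi; destruct (AM i Hi) as [? [? [? [? [? [? [? ?]]]]]]]; assumption).
  assert (X3 : ex_RInt (f3 T gamma) 0 T) by (apply PWx; intros i Hi; destruct (AM i Hi) as [? [? [? [? [? [? [? ?]]]]]]]; assumption).
  assert (X4 : ex_RInt (f4 T u r gamma) 0 T) by (apply PWx; intros i Hi; destruct (AM i Hi) as [? [? [? [? [? [? [? ?]]]]]]]; assumption).
  assert (X6 : ex_RInt (f6 u r) 0 T) by (apply PWx; intros i Hi; destruct (AM i Hi) as [? [? [? [? [? [? [? ?]]]]]]]; assumption).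
  assert (X7 : ex_RInt (f7 T u r) 0 T) by (apply PWx; intros i Hi; destruct (AM i Hi) as [? [? [? [? [? [? [? ?]]]]]]]; assumption).
  assert (X8 : ex_RInt (f8 u) 0 T) by (apply PWx; intros i Hi; destruct (AM i Hi) as [? [? [? [? [? [? [? ?]]]]]]]; assumption).
  assert (XP : is_RInt (Phi T u r gamma) 0 T (Hf T u r gamma T - Hf T u r gamma 0))
    by (apply PWi; intros i Hi; destruct (AM i Hi) as [? [? [? [? [? [? [? ?]]]]]]]; assumption).
  assert (H0 : Hf T u r gamma T - Hf T u r gamma 0 = 0).
  { unfold Hf. replace (T + T) with (0 + 2 * T) by ring. rewrite Hper.
    pose proof (Hanti 0) as E. rewrite Rplus_0_l in E. rewrite E, Rplus_0_l.
    unfold det, padd, popp; simpl. ring. }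
  rewrite H0 in XP.
  set (I1 := RInt (f1 gamma) 0 T). set (I2 := RInt (f2 T gamma) 0 T).
  set (I3 := RInt (f3 T gamma) 0 T). set (I4 := RInt (f4 T u r gamma) 0 T).
  set (I6 := RInt (f6 u r) 0 T). set (I7 := RInt (f7 T u r) 0 T).
  set (I8 := RInt (f8 u) 0 T).
  set (w := mean_width T u r).
  assert (XQ : is_RInt (Phi T u r gamma) 0 T
     (I1 + I2 - 2 * I3 - 2 * I4 - w * (I6 + I7) + / 2 * w ^ 2 * I8)).
  { apply isR_plus. apply isR_minus. apply isR_minus. apply isR_minus.
    apply isR_plus; apply (RInt_correct (V:=R_CompleteNormedModule)); auto.
    apply isR_scal; apply (RInt_correct (V:=R_CompleteNormedModule)); auto.
    apply isR_scal; apply (RInt_correct (V:=R_CompleteNormedModule)); auto.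
    apply isR_scal. apply isR_plus; apply (RInt_correct (V:=R_CompleteNormedModule)); auto.
    apply isR_scal; apply (RInt_correct (V:=R_CompleteNormedModule)); auto. }
  assert (EPhi : I1 + I2 - 2 * I3 - 2 * I4 - w * (I6 + I7) + / 2 * w ^ 2 * I8 = 0).
  { rewrite <- (is_RInt_unique _ _ _ _ XQ). exact (is_RInt_unique _ _ _ _ XP). }
  assert (EG : area_curve T gamma = / 2 * (I1 + I2)).
  { unfold area_curve. f_equal. apply (Lshift (f1 gamma) (f2 T gamma) T); auto. }
  assert (EC : area_CWMS T u r gamma = / 2 * (I4 + I4)).
  { unfold area_CWMS. f_equal. apply (Lshift (f4 T u r gamma) (f4 T u r gamma) T); auto.
    intro t. symmetry. apply f4_per; auto. }
  assert (EU : area_U T u = / 2 * (I8 + I8)).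
  { unfold area_U. f_equal. apply (Lshift (f8 u) (f8 u) T); auto.
    intro t. symmetry. apply f8_per; auto. }
  assert (EL : dual_length T u r = I6 + I7).
  { unfold dual_length. apply (Lshift (f6 u r) (f7 T u r) T); auto. }
  assert (EW : area_WC T gamma = / 2 * I3) by reflexivity.
  assert (Hw : w = (I6 + I7) / (/ 2 * (I8 + I8))).
  { unfold w, mean_width. rewrite EL, EU. reflexivity. }
  rewrite EG, EC, EU, EL, EW. exact (final_alg I1 I2 I3 I4 I6 I7 I8 w EPhi Hw).
Qed.
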